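(* Let $\{1,\mu_1,\mu_2,\mu_3\}$ be a quaternion basis ($\mu_1,\mu_2$ orthogonal pure unit quaternions, $\mu_3=\mu_1\mu_2$), and let $q=z_1+z_2\mu_2$ with $z_1,z_2$ random variables in $\mathbb{C}_{\mu_1}$ be a centered quaternion Gaussian random variable which is $(\mu_1,\mu_1)$-proper, i.e. $q\stackrel{d}{=}\mu_1 q\mu_1$. Let ${\bf q}_{\mathbb{C}}=[z_1,z_1^{\star},z_2,z_2^{\star}]^T$. Then $$\mathbb{E}[{\bf q}_{\mathbb{C}}{\bf q}_{\mathbb{C}}^{\dagger}]=\begin{bmatrix}\sigma^2 & \alpha & 0 & 0\\ \alpha^{\star} & \sigma^2 & 0 & 0\\ 0 & 0 & \varsigma^2 & \delta\\ 0 & 0 & \delta^{\star} & \varsigma^2\end{bmatrix},$$ where $\sigma^2=\mathbb{E}[|z_1|^2]\in\mathbb{R}$, $\varsigma^2=\mathbb{E}[|z_2|^2]\in\mathbb{R}$, $\alpha=\mathbb{E}[z_1^2]\in\mathbb{C}_{\mu_1}$ and $\delta=\mathbb{E}[z_2^2]\in\mathbb{C}_{\mu_1}$.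
   Context: $\mathbb{H}$ denotes the quaternions; $\mathbb{C}_{\mu_1}=\mathbb{R}\oplus\mu_1\mathbb{R}$ is the commutative subfield isomorphic to $\mathbb{C}$; $^{\star}$ denotes conjugation and $\dagger$ conjugate transpose. A quaternion Gaussian random variable is one whose four real components are jointly Gaussian; centered means $\mathbb{E}[q]=0$. $\stackrel{d}{=}$ denotes equality in distribution. *)

(* Defs.v *)
From HB Require Import structures.
From mathcomp Require Import all_boot all_order all_algebra.
From mathcomp Require Import all_classical all_reals all_analysis.

Set Implicit Arguments.
Unset Strict Implicit.
Unset Printing Implicit Defensive.

Import Order.TTheory GRing.Theory Num.Theory.
Local Open Scope classical_set_scope.
Local Open Scope ring_scope.

Record quat (R : realType) := Quat { qr : R; qi : R; qj : R; qk : R }.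

Section Quat.
Variable R : realType.
Implicit Types p q : quat R.

Definition qzero : quat R := Quat 0 0 0 0.
Definition qreal (a : R) : quat R := Quat a 0 0 0.
Definition qadd p q := Quat (qr p + qr q) (qi p + qi q) (qj p + qj q) (qk p + qk q).
Definition qscale (a : R) q := Quat (a * qr q) (a * qi q) (a * qj q) (a * qk q).
Definition qopp q := Quat (- qr q) (- qi q) (- qj q) (- qk q).
Definition qmul p q := Quat
  (qr p * qr q - qi p * qi q - qj p * qj q - qk p * qk q)
  (qr p * qi q + qi p * qr q + qj p * qk q - qk p * qj q)
  (qr p * qj q - qi p * qk q + qj p * qr q + qk p * qi q)
  (qr p * qk q + qi p * qj q - qj p * qi q + qk p * qr q).
Definition qconj q := Quat (qr q) (- qi q) (- qj q) (- qk q).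
Definition qnorm2 q := qr q ^+ 2 + qi q ^+ 2 + qj q ^+ 2 + qk q ^+ 2.

Definition pure_unit q := qr q = 0 /\ qnorm2 q = 1.
Definition qorth p q := qr p * qr q + qi p * qi q + qj p * qj q + qk p * qk q = 0.

Definition quat_basis (mu1 mu2 mu3 : quat R) :=
  [/\ pure_unit mu1, pure_unit mu2, qorth mu1 mu2 & mu3 = qmul mu1 mu2].

Definition inC (mu z : quat R) := exists x y : R, z = qadd (qreal x) (qscale y mu).

Definition qcoords q : R * (R * (R * R)) := (qr q, (qi q, (qj q, qk q))).

Definition qmx4 (rows : seq (seq (quat R))) : 'M[quat R]_4 :=
  \matrix_(i < 4, j < 4) nth qzero (nth [::] rows i) j.

Definition qvec4 (a b c d : quat R) (i : 'I_4) : quat R := nth qzero [:: a; b; c; d] i.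
End Quat.

Section Prob.
Context {d : measure_display} {T : measurableType d} {R : realType}.
Variable P : probability T R.

(** expectation of a real random variable (finite here, since Gaussian) *)
Definition rexpect (f : T -> R) : R := fine (\int[P]_x (f x)%:E)%E.

Definition qexpect (f : T -> quat R) : quat R :=
  Quat (rexpect (fun x => qr (f x))) (rexpect (fun x => qi (f x)))
       (rexpect (fun x => qj (f x))) (rexpect (fun x => qk (f x))).

Definition gaussian_rv (Y : T -> R) :=
  measurable_fun setT Y /\
  exists m s : R,
    (s = 0 /\ forall A : set R, measurable A -> P (Y @^-1` A) = \d_m A) \/
    (0 < s /\ forall A : set R, measurable A -> P (Y @^-1` A) = normal_prob m s A).

(** quaternion Gaussian: the four real components are jointly Gaussian,
    i.e. every real linear combination of them is Gaussian *)
Definition quat_gaussian (q : T -> quat R) :=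
  forall u0 u1 u2 u3 : R,
    gaussian_rv (fun x => u0 * qr (q x) + u1 * qi (q x) + u2 * qj (q x) + u3 * qk (q x)).

Definition quat_centered (q : T -> quat R) := qexpect q = qzero R.

Definition quat_eq_dist (q q' : T -> quat R) :=
  forall A : set (R * (R * (R * R))), measurable A ->
    P ((fun x => qcoords (q x)) @^-1` A) = P ((fun x => qcoords (q' x)) @^-1` A).
End Prob.

(* Main.v *)
Require Import Defs.
From HB Require Import structures.
From mathcomp Require Import all_boot all_order all_algebra.
From mathcomp Require Import all_classical all_reals all_analysis.
From mathcomp Require Import measurable_realfun lebesgue_measure.
From mathcomp Require Import ring lra.
Set Implicit Arguments.
Unset Strict Implicit.
Unset Printing Implicit Defensive.
Import Order.TTheory GRing.Theory Num.Theory.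
Local Open Scope ring_scope.

Section QAlg.
Variable R : realType.
Implicit Types p q r w : quat R.

Lemma quatE p q : qr p = qr q -> qi p = qi q -> qj p = qj q -> qk p = qk q -> p = q.
Proof. by case: p; case: q => /= ? ? ? ? ? ? ? ? -> -> -> ->. Qed.

Ltac qs := repeat match goal with p : quat _ |- _ => destruct p end;
  apply: quatE; rewrite /= ; ring.

Lemma qmulA p q r : qmul p (qmul q r) = qmul (qmul p q) r. Proof. qs. Qed.
Lemma qmulDl p q r : qmul (qadd p q) r = qadd (qmul p r) (qmul q r). Proof. qs. Qed.
Lemma qmulDr p q r : qmul r (qadd p q) = qadd (qmul r p) (qmul r q). Proof. qs. Qed.
Lemma qmulNl p q : qmul (qopp p) q = qopp (qmul p q). Proof. qs. Qed.
Lemma qmulNr p q : qmul p (qopp q) = qopp (qmul p q). Proof. qs. Qed.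
Lemma qmulZl a p q : qmul (qscale a p) q = qscale a (qmul p q). Proof. qs. Qed.
Lemma qmulZr a p q : qmul p (qscale a q) = qscale a (qmul p q). Proof. qs. Qed.
Lemma qmul_real_r a p : qmul p (qreal a) = qscale a p. Proof. qs. Qed.
Lemma qmul_real_l a p : qmul (qreal a) p = qscale a p. Proof. qs. Qed.
Lemma qconjM p q : qconj (qmul p q) = qmul (qconj q) (qconj p). Proof. qs. Qed.
Lemma qconjK p : qconj (qconj p) = p. Proof. qs. Qed.
Lemma qconjN p : qconj (qopp p) = qopp (qconj p). Proof. qs. Qed.
Lemma qoppK p : qopp (qopp p) = p. Proof. qs. Qed.
Lemma qscaleN1 p : qscale (-1) p = qopp p. Proof. qs. Qed.
Lemma qscale1 p : qscale 1 p = p. Proof. qs. Qed.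
Lemma qmul_conj p : qmul p (qconj p) = qreal (qnorm2 p). Proof. rewrite /qnorm2; qs. Qed.
Lemma qconj_mul p : qmul (qconj p) p = qreal (qnorm2 p). Proof. rewrite /qnorm2; qs. Qed.

Lemma pure_sq (mu : quat R) : pure_unit mu -> qmul mu mu = qreal (-1).
Proof.
case: mu => a b c e [/= -> ]; rewrite /qnorm2 /= => h.
apply: quatE => /=; [|ring|ring|ring].
by rewrite -h; ring.
Qed.

Lemma orth_anti (m n : quat R) : pure_unit m -> pure_unit n -> qorth m n ->
  qmul n m = qopp (qmul m n).
Proof.
case: m => a b c e; case: n => a' b' c' e' [/= -> _] [/= -> _]; rewrite /qorth /= => h.
apply: quatE => /=; try ring.
rewrite !mul0r !add0r in h; rewrite !mul0r !sub0r; nra.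
Qed.


Lemma inC_comm (mu z : quat R) : inC mu z -> qmul mu (qmul z mu) = qmul z (qmul mu mu).
Proof. case=> x [y ->]; qs. Qed.
Lemma inC_comm2 (mu z n : quat R) : inC mu z ->
  qmul mu (qmul (qmul z n) mu) = qmul z (qmul mu (qmul n mu)).
Proof. case=> x [y ->]; qs. Qed.

Definition phi (mu w : quat R) := qmul mu (qmul w mu).
Definition Z1f (mu w : quat R) := qscale (2^-1) (qadd w (qopp (phi mu w))).
Definition Z2f (mu mu2 w : quat R) := qscale (- 2^-1) (qmul (qadd w (phi mu w)) mu2).

Lemma phi_q (mu1 mu2 z1 z2 : quat R) : pure_unit mu1 -> pure_unit mu2 -> qorth mu1 mu2 ->
  inC mu1 z1 -> inC mu1 z2 ->
  phi mu1 (qadd z1 (qmul z2 mu2)) = qadd (qopp z1) (qmul z2 mu2).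
Proof.
move=> p1 p2 o h1 h2; rewrite /phi qmulDl qmulDr (inC_comm h1) (inC_comm2 _ h2).
rewrite (orth_anti p1 p2 o) qmulNr (qmulA mu1 mu1 mu2) (pure_sq p1); qs.
Qed.

Lemma phiK (mu w : quat R) : pure_unit mu -> phi mu (phi mu w) = w.
Proof.
move=> p; rewrite /phi.
have -> : qmul mu (qmul (qmul mu (qmul w mu)) mu) = qmul (qmul mu mu) (qmul w (qmul mu mu)) by qs.
rewrite (pure_sq p) qmul_real_l qmul_real_r; qs.
Qed.

Lemma Z1phi (mu w : quat R) : pure_unit mu -> Z1f mu (phi mu w) = qopp (Z1f mu w).
Proof. move=> p; rewrite /Z1f phiK //; move: (phi mu w) => v; qs. Qed.

Lemma Z2phi (mu mu2 w : quat R) : pure_unit mu -> Z2f mu mu2 (phi mu w) = Z2f mu mu2 w.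
Proof. move=> p; rewrite /Z2f phiK //; move: (phi mu w) => v; qs. Qed.

Lemma Z1q (mu1 mu2 z1 z2 : quat R) : pure_unit mu1 -> pure_unit mu2 -> qorth mu1 mu2 ->
  inC mu1 z1 -> inC mu1 z2 -> Z1f mu1 (qadd z1 (qmul z2 mu2)) = z1.
Proof.
move=> p1 p2 o h1 h2; rewrite /Z1f phi_q //.
destruct z1; destruct z2; destruct mu2; by apply: quatE => /=; field.
Qed.

Lemma Z2q (mu1 mu2 z1 z2 : quat R) : pure_unit mu1 -> pure_unit mu2 -> qorth mu1 mu2 ->
  inC mu1 z1 -> inC mu1 z2 -> Z2f mu1 mu2 (qadd z1 (qmul z2 mu2)) = z2.
Proof.
move=> p1 p2 o h1 h2; rewrite /Z2f phi_q //.
have -> : qadd (qadd z1 (qmul z2 mu2)) (qadd (qopp z1) (qmul z2 mu2)) = qscale 2 (qmul z2 mu2) by qs.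
rewrite qmulZl -qmulA (pure_sq p2) qmul_real_r.
destruct z2; by apply: quatE => /=; field.
Qed.

Lemma inC_sq (mu z : quat R) : pure_unit mu -> inC mu z -> inC mu (qmul z z).
Proof.
move=> p [a [b ->]]; exists (a*a - b*b), (2*a*b).
have -> : forall w : quat R, qmul (qadd (qreal a) (qscale b w)) (qadd (qreal a) (qscale b w))
   = qadd (qreal (a*a)) (qadd (qscale (2*a*b) w) (qscale (b*b) (qmul w w))) by move=> w; qs.
rewrite (pure_sq p); qs.
Qed.

Definition tco (mu w : quat R) := qi w * qi mu + qj w * qj mu + qk w * qk mu.

Lemma inC_dec (mu w : quat R) : pure_unit mu -> inC mu w ->
  [/\ qi w = tco mu w * qi mu, qj w = tco mu w * qj mu & qk w = tco mu w * qk mu].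
Proof.
case: mu => a b c e [/= -> h] [x [y ->]].
have ht : tco (Quat 0 b c e) (qadd (qreal x) (qscale y (Quat 0 b c e))) = y.
  rewrite /tco /= -[RHS]mulr1 -h /qnorm2 /=; ring.
rewrite ht /=; split; ring.
Qed.
End QAlg.
Section Meas.
Context {R : realType} {d : measure_display} {S : measurableType d}.

Definition qmeas (G : S -> quat R) :=
  [/\ measurable_fun setT (fun x => qr (G x)), measurable_fun setT (fun x => qi (G x)),
      measurable_fun setT (fun x => qj (G x)) & measurable_fun setT (fun x => qk (G x))].

Lemma mD (f g : S -> R) : measurable_fun setT f -> measurable_fun setT g ->
  measurable_fun setT (fun x => f x + g x).
Proof. exact: measurable_funD. Qed.
Lemma mB (f g : S -> R) : measurable_fun setT f -> measurable_fun setT g ->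
  measurable_fun setT (fun x => f x - g x).
Proof. exact: measurable_funB. Qed.
Lemma mM (f g : S -> R) : measurable_fun setT f -> measurable_fun setT g ->
  measurable_fun setT (fun x => f x * g x).
Proof. exact: measurable_funM. Qed.
Lemma mN (f : S -> R) : measurable_fun setT f -> measurable_fun setT (fun x => - f x).
Proof. exact: measurable_funN. Qed.
Lemma mC (c : R) : measurable_fun setT (fun _ : S => c).
Proof. exact: measurable_cst. Qed.

Ltac mt := repeat first [apply: mD | apply: mB | apply: mM | apply: mN | apply: mC | assumption].

Lemma qmeas_add G H : qmeas G -> qmeas H -> qmeas (fun x => qadd (G x) (H x)).
Proof. by case=> ? ? ? ?; case=> ? ? ? ?; split => /=; mt. Qed.
Lemma qmeas_mul G H : qmeas G -> qmeas H -> qmeas (fun x => qmul (G x) (H x)).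
Proof. by case=> ? ? ? ?; case=> ? ? ? ?; split => /=; mt. Qed.
Lemma qmeas_conj G : qmeas G -> qmeas (fun x => qconj (G x)).
Proof. by case=> ? ? ? ?; split => /=; mt. Qed.
Lemma qmeas_opp G : qmeas G -> qmeas (fun x => qopp (G x)).
Proof. by case=> ? ? ? ?; split => /=; mt. Qed.
Lemma qmeas_scale a G : qmeas G -> qmeas (fun x => qscale a (G x)).
Proof. by case=> ? ? ? ?; split => /=; mt. Qed.
Lemma qmeas_cst w : qmeas (fun _ => w).
Proof. by split => /=; mt. Qed.

Lemma qmeas_coords G : qmeas G -> measurable_fun setT (fun x => qcoords (G x)).
Proof.
case=> ? ? ? ?; rewrite /qcoords.
by apply: measurable_fun_pair => //; apply: measurable_fun_pair => //;
  apply: measurable_fun_pair.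
Qed.

End Meas.

Lemma qmeas_Q (R : realType) :
  qmeas (fun p : R * (R * (R * R)) => Quat p.1 p.2.1 p.2.2.1 p.2.2.2).
Proof.
split => /=.
- exact: measurable_fst.
- exact: measurableT_comp measurable_fst measurable_snd.
- apply: measurableT_comp; first exact: measurable_fst.
  exact: measurableT_comp measurable_snd measurable_snd.
- apply: measurableT_comp; first exact: measurable_snd.
  exact: measurableT_comp measurable_snd measurable_snd.
Qed.

Lemma qmeas_phi (R : realType) d (S : measurableType d) (mu : quat R) (G : S -> quat R) :
  qmeas G -> qmeas (fun x => phi mu (G x)).
Proof. by move=> h; rewrite /phi; apply: qmeas_mul; [apply: qmeas_cst|apply: qmeas_mul => //; apply: qmeas_cst]. Qed.
Lemma qmeas_Z1 (R : realType) d (S : measurableType d) (mu : quat R) (G : S -> quat R) :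
  qmeas G -> qmeas (fun x => Z1f mu (G x)).
Proof. by move=> h; rewrite /Z1f; apply: qmeas_scale; apply: qmeas_add => //; apply: qmeas_opp; apply: qmeas_phi. Qed.
Lemma qmeas_Z2 (R : realType) d (S : measurableType d) (mu mu2 : quat R) (G : S -> quat R) :
  qmeas G -> qmeas (fun x => Z2f mu mu2 (G x)).
Proof. by move=> h; rewrite /Z2f; apply: qmeas_scale; apply: qmeas_mul; [apply: qmeas_add => //; apply: qmeas_phi|apply: qmeas_cst]. Qed.

Section Exp.
Context {d : measure_display} {T : measurableType d} {R : realType}.
Variable P : probability T R.

Lemma fineBN (a b : \bar R) : (0 <= a)%E -> (0 <= b)%E -> fine (b - a)%E = - fine (a - b)%E.
Proof.
case: a => [a||] //; case: b => [b||] //= _ _; rewrite ?oppr0 //.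
by rewrite opprB.
Qed.

Lemma rexpectN (f : T -> R) : rexpect P (fun x => - f x) = - rexpect P f.
Proof.
rewrite /rexpect.
have -> : (fun x => (- f x)%:E) = (\- (fun x => (f x)%:E))%E.
  by apply/funext => x; rewrite EFinN.
rewrite integralE [in RHS]integralE funeposN funenegN fineBN //.
  by apply: integral_ge0 => x _; apply: funepos_ge0.
by apply: integral_ge0 => x _; apply: funeneg_ge0.
Qed.

Lemma transfer d2 (Y : measurableType d2) (g : T -> Y) (F : Y -> R) :
  measurable_fun setT g -> measurable_fun setT F ->
  (\int[pushforward P g]_(y in setT) (F y)%:E = \int[P]_(x in setT) (F (g x))%:E)%E.
Proof.
move=> mg mF.
have mEF : measurable_fun setT (EFin \o F) by apply/measurable_EFinP.
rewrite integralE [in RHS]integralE.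
rewrite ge0_integral_pushforward //; last first.
  exact: measurable_funepos.
rewrite ge0_integral_pushforward //; last first.
  exact: measurable_funeneg.
rewrite preimage_setT.
have -> : (fun x => (F (g x))%:E) = ((EFin \o F) \o g) by [].
by rewrite (funepos_comp (EFin \o F) g) (funeneg_comp (EFin \o F) g).
Qed.


Lemma fineZB (c : R) (a b : \bar R) : 0 <= c -> (0 <= a)%E -> (0 <= b)%E ->
  fine (c%:E * a - c%:E * b)%E = c * fine (a - b)%E.
Proof.
rewrite le_eqVlt => /predU1P[<-|c0]; first by rewrite !mul0e subee // mul0r.
case: a => [a||] //; case: b => [b||] //= _ _.
all: rewrite ?gt0_muley ?lte_fin //= ?mulr0 //.
by rewrite mulrBr.
Qed.

Lemma rexpectZ_ge0 (c : R) (f : T -> R) : 0 <= c -> measurable_fun setT f ->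
  rexpect P (fun x => c * f x) = c * rexpect P f.
Proof.
move=> c0 mf; rewrite /rexpect.
have mEf : measurable_fun setT (EFin \o f) by apply/measurable_EFinP.
rewrite integralE [in RHS]integralE.
have -> : ((fun x => (c * f x)%:E)^\+ = fun x => c%:E * (EFin \o f)^\+ x)%E.
  by apply/funext => x; rewrite !funeposE maxe_pMr // mule0 EFinM.
have -> : ((fun x => (c * f x)%:E)^\- = fun x => c%:E * (EFin \o f)^\- x)%E.
  by apply/funext => x; rewrite !funenegE maxe_pMr // mule0 muleN EFinM.
rewrite ge0_integralZl_EFin //; try by move=> x _; apply: funepos_ge0.
rewrite ge0_integralZl_EFin //; try by move=> x _; apply: funeneg_ge0.
rewrite fineZB //.
  by apply: integral_ge0 => x _; apply: funepos_ge0.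
by apply: integral_ge0 => x _; apply: funeneg_ge0.
- exact: measurable_funeneg.
- exact: measurable_funepos.
Qed.

Lemma rexpectZ (c : R) (f : T -> R) : measurable_fun setT f ->
  rexpect P (fun x => c * f x) = c * rexpect P f.
Proof.
move=> mf; have [c0|c0] := leP 0 c; first exact: rexpectZ_ge0.
have -> : (fun x => c * f x) = (fun x => - ((- c) * f x)).
  by apply/funext => x; rewrite mulNr opprK.
rewrite rexpectN rexpectZ_ge0 //; last by rewrite oppr_ge0 ltW.
by rewrite mulNr opprK.
Qed.


Lemma rexpect0 : rexpect P (fun _ => 0) = 0.
Proof. by rewrite /rexpect (_ : (fun _ => 0%:E) = cst 0%E) // integral0. Qed.

Lemma qexpect_real (f : T -> R) : qexpect P (fun x => qreal (f x)) = qreal (rexpect P f).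
Proof. by rewrite /qexpect /= rexpect0. Qed.

Lemma qexpect_conj (f : T -> quat R) : qexpect P (fun x => qconj (f x)) = qconj (qexpect P f).
Proof. by rewrite /qexpect /= !rexpectN. Qed.

Lemma inC_expect (mu : quat R) (f : T -> quat R) : pure_unit mu -> qmeas f ->
  (forall x, inC mu (f x)) -> inC mu (qexpect P f).
Proof.
move=> pu [m0 m1 m2 m3] hf.
have mt : measurable_fun setT (fun x => tco mu (f x)).
  by rewrite /tco; apply: mD; [apply: mD|]; apply: mM => //; apply: mC.
exists (rexpect P (fun x => qr (f x))), (rexpect P (fun x => tco mu (f x))).
have ei : (fun x => qi (f x)) = (fun x => qi mu * tco mu (f x)).
  by apply/funext => x; have [-> _ _] := inC_dec pu (hf x); rewrite mulrC.
have ej : (fun x => qj (f x)) = (fun x => qj mu * tco mu (f x)).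
  by apply/funext => x; have [_ -> _] := inC_dec pu (hf x); rewrite mulrC.
have ek : (fun x => qk (f x)) = (fun x => qk mu * tco mu (f x)).
  by apply/funext => x; have [_ _ ->] := inC_dec pu (hf x); rewrite mulrC.
case: (pu) => r0 _.
rewrite /qexpect ei ej ek !rexpectZ //; apply: quatE => /=; rewrite ?r0; ring.
Qed.

Lemma sym_zero (q q' : T -> quat R) (F : quat R -> R) :
  measurable_fun setT (fun x => qcoords (q x)) ->
  measurable_fun setT (fun x => qcoords (q' x)) ->
  measurable_fun setT (fun p : R * (R * (R * R)) => F (Quat p.1 p.2.1 p.2.2.1 p.2.2.2)) ->
  quat_eq_dist P q q' ->
  (forall x, F (q' x) = - F (q x)) ->
  rexpect P (fun x => F (q x)) = 0.
Proof.
move=> mg mg' mF hd hF.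
set F' := fun p : R * (R * (R * R)) => F (Quat p.1 p.2.1 p.2.2.1 p.2.2.2).
have eF : forall w, F w = F' (qcoords w) by case.
have h : rexpect P (fun x => F (q x)) = - rexpect P (fun x => F (q x)).
  rewrite -rexpectN -(funext hF) /rexpect.
  rewrite (_ : (fun x => (F (q x))%:E) = (fun x => (F' (qcoords (q x)))%:E)); last first.
    by apply/funext => x; rewrite eF.
  rewrite (_ : (fun x => (F (q' x))%:E) = (fun x => (F' (qcoords (q' x)))%:E)); last first.
    by apply/funext => x; rewrite eF.
  rewrite -(transfer mg mF) -(transfer mg' mF).
  congr fine; apply: eq_measure_integral => A mA _.
  exact: hd.
lra.
Qed.

End Exp.

Lemma mext (d : measure_display) (T : measurableType d) (R : realType) (f g : T -> R) :
  measurable_fun setT f -> (forall x, f x = g x) -> measurable_fun setT g.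
Proof. by move=> h /funext <-. Qed.

Theorem mainTheorem6 (d : measure_display) (T : measurableType d) (R : realType)
  (P : probability T R) (mu1 mu2 mu3 : quat R) (z1 z2 : T -> quat R) :
  quat_basis mu1 mu2 mu3 ->
  (forall x, inC mu1 (z1 x)) -> (forall x, inC mu1 (z2 x)) ->
  let q := fun x => qadd (z1 x) (qmul (z2 x) mu2) in
  quat_gaussian P q ->
  quat_centered P q ->
  quat_eq_dist P q (fun x => qmul mu1 (qmul (q x) mu1)) ->
  let qC := fun x => qvec4 (z1 x) (qconj (z1 x)) (z2 x) (qconj (z2 x)) in
  let sigma2 : R := rexpect P (fun x => qnorm2 (z1 x)) in
  let varsigma2 : R := rexpect P (fun x => qnorm2 (z2 x)) in
  let alpha := qexpect P (fun x => qmul (z1 x) (z1 x)) in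
  let delta := qexpect P (fun x => qmul (z2 x) (z2 x)) in
  let O := qzero R in
  [/\ \matrix_(i < 4, j < 4) qexpect P (fun x => qmul (qC x i) (qconj (qC x j)))
      = qmx4 [:: [:: qreal sigma2; alpha; O; O];
                 [:: qconj alpha; qreal sigma2; O; O];
                 [:: O; O; qreal varsigma2; delta];
                 [:: O; O; qconj delta; qreal varsigma2]],
      inC mu1 alpha & inC mu1 delta].
Proof.
move=> [p1 p2 o _] h1 h2 q hg _ hd qC s2 vs2 alpha delta O.
have mq : qmeas q.
  split.
  - by apply: (mext (hg 1 0 0 0).1) => x; ring.
  - by apply: (mext (hg 0 1 0 0).1) => x; ring.
  - by apply: (mext (hg 0 0 1 0).1) => x; ring.
  - by apply: (mext (hg 0 0 0 1).1) => x; ring.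
have ez1 : z1 = fun x => Z1f mu1 (q x).
  by apply/funext => x; rewrite /q Z1q.
have ez2 : z2 = fun x => Z2f mu1 mu2 (q x).
  by apply/funext => x; rewrite /q Z2q.
have mz1 : qmeas z1 by rewrite ez1; apply: qmeas_Z1.
have mz2 : qmeas z2 by rewrite ez2; apply: qmeas_Z2.
have zero_entry : forall G : quat R -> quat R,
    qmeas (fun p : R * (R * (R * R)) => G (Quat p.1 p.2.1 p.2.2.1 p.2.2.2)) ->
    (forall w, G (phi mu1 w) = qopp (G w)) ->
    qexpect P (fun x => G (q x)) = qzero R.
  move=> G [g0 g1 g2 g3] hG.
  have mc := qmeas_coords mq.
  have mc' : measurable_fun setT (fun x => qcoords (qmul mu1 (qmul (q x) mu1))).
    exact: (qmeas_coords (qmeas_phi mu1 mq)).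
  rewrite /qexpect; apply: quatE => /=.
  - apply: (sym_zero (F := fun w => qr (G w)) mc mc' g0 hd) => x; exact: (congr1 (fun w => qr w) (hG (q x))).
  - apply: (sym_zero (F := fun w => qi (G w)) mc mc' g1 hd) => x; exact: (congr1 (fun w => qi w) (hG (q x))).
  - apply: (sym_zero (F := fun w => qj (G w)) mc mc' g2 hd) => x; exact: (congr1 (fun w => qj w) (hG (q x))).
  - apply: (sym_zero (F := fun w => qk (G w)) mc mc' g3 hd) => x; exact: (congr1 (fun w => qk w) (hG (q x))).
have mQ := @qmeas_Q R.
split; last 2 first.
- apply: inC_expect => //; first exact: qmeas_mul.
  by move=> x; apply: inC_sq.
- apply: inC_expect => //; first exact: qmeas_mul.
  by move=> x; apply: inC_sq.
apply/matrixP => i j; rewrite !mxE.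
case: i => [[|[|[|[|i]]]] Hi] //; case: j => [[|[|[|[|j]]]] Hj] //; rewrite /qC /qvec4 /=.
- rewrite (_ : (fun x => qmul (z1 x) (qconj (z1 x))) = fun x => qreal (qnorm2 (z1 x))).
    exact: qexpect_real.
  by apply/funext => x; exact: qmul_conj.
- rewrite /alpha; congr qexpect; apply/funext => x; exact: congr1 (qconjK _).
- rewrite ez1 ez2; apply: (zero_entry (fun w => qmul (Z1f mu1 w) (qconj (Z2f mu1 mu2 w)))).
    + by repeat first [apply: qmeas_mul | apply: qmeas_conj | apply: qmeas_Z1 | apply: qmeas_Z2 | exact: mQ].
    + by move=> w /=; rewrite (Z1phi _ p1) (Z2phi _ _ p1) ?qconjN ?qmulNl ?qmulNr.
- rewrite ez1 ez2; apply: (zero_entry (fun w => qmul (Z1f mu1 w) (qconj (qconj (Z2f mu1 mu2 w))))).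
    + by repeat first [apply: qmeas_mul | apply: qmeas_conj | apply: qmeas_Z1 | apply: qmeas_Z2 | exact: mQ].
    + by move=> w /=; rewrite (Z1phi _ p1) (Z2phi _ _ p1) ?qconjN ?qmulNl ?qmulNr.
- rewrite (_ : (fun x => qmul (qconj (z1 x)) (qconj (z1 x))) = fun x => qconj (qmul (z1 x) (z1 x))).
    exact: qexpect_conj.
  by apply/funext => x; rewrite qconjM.
- rewrite (_ : (fun x => qmul (qconj (z1 x)) (qconj (qconj (z1 x)))) = fun x => qreal (qnorm2 (z1 x))).
    exact: qexpect_real.
  by apply/funext => x; rewrite qconjK qconj_mul.
- rewrite ez1 ez2; apply: (zero_entry (fun w => qmul (qconj (Z1f mu1 w)) (qconj (Z2f mu1 mu2 w)))).
    + by repeat first [apply: qmeas_mul | apply: qmeas_conj | apply: qmeas_Z1 | apply: qmeas_Z2 | exact: mQ].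
    + by move=> w /=; rewrite (Z1phi _ p1) (Z2phi _ _ p1) ?qconjN ?qmulNl ?qmulNr.
- rewrite ez1 ez2; apply: (zero_entry (fun w => qmul (qconj (Z1f mu1 w)) (qconj (qconj (Z2f mu1 mu2 w))))).
    + by repeat first [apply: qmeas_mul | apply: qmeas_conj | apply: qmeas_Z1 | apply: qmeas_Z2 | exact: mQ].
    + by move=> w /=; rewrite (Z1phi _ p1) (Z2phi _ _ p1) ?qconjN ?qmulNl ?qmulNr.
- rewrite ez1 ez2; apply: (zero_entry (fun w => qmul (Z2f mu1 mu2 w) (qconj (Z1f mu1 w)))).
    + by repeat first [apply: qmeas_mul | apply: qmeas_conj | apply: qmeas_Z1 | apply: qmeas_Z2 | exact: mQ].
    + by move=> w /=; rewrite (Z1phi _ p1) (Z2phi _ _ p1) ?qconjN ?qmulNl ?qmulNr.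
- rewrite ez1 ez2; apply: (zero_entry (fun w => qmul (Z2f mu1 mu2 w) (qconj (qconj (Z1f mu1 w))))).
    + by repeat first [apply: qmeas_mul | apply: qmeas_conj | apply: qmeas_Z1 | apply: qmeas_Z2 | exact: mQ].
    + by move=> w /=; rewrite (Z1phi _ p1) (Z2phi _ _ p1) ?qconjN ?qmulNl ?qmulNr.
- rewrite (_ : (fun x => qmul (z2 x) (qconj (z2 x))) = fun x => qreal (qnorm2 (z2 x))).
    exact: qexpect_real.
  by apply/funext => x; exact: qmul_conj.
- rewrite /delta; congr qexpect; apply/funext => x; exact: congr1 (qconjK _).
- rewrite ez1 ez2; apply: (zero_entry (fun w => qmul (qconj (Z2f mu1 mu2 w)) (qconj (Z1f mu1 w)))).
    + by repeat first [apply: qmeas_mul | apply: qmeas_conj | apply: qmeas_Z1 | apply: qmeas_Z2 | exact: mQ].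
    + by move=> w /=; rewrite (Z1phi _ p1) (Z2phi _ _ p1) ?qconjN ?qmulNl ?qmulNr.
- rewrite ez1 ez2; apply: (zero_entry (fun w => qmul (qconj (Z2f mu1 mu2 w)) (qconj (qconj (Z1f mu1 w))))).
    + by repeat first [apply: qmeas_mul | apply: qmeas_conj | apply: qmeas_Z1 | apply: qmeas_Z2 | exact: mQ].
    + by move=> w /=; rewrite (Z1phi _ p1) (Z2phi _ _ p1) ?qconjN ?qmulNl ?qmulNr.
- rewrite (_ : (fun x => qmul (qconj (z2 x)) (qconj (z2 x))) = fun x => qconj (qmul (z2 x) (z2 x))).
    exact: qexpect_conj.
  by apply/funext => x; rewrite qconjM.
- rewrite (_ : (fun x => qmul (qconj (z2 x)) (qconj (qconj (z2 x)))) = fun x => qreal (qnorm2 (z2 x))).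
    exact: qexpect_real.
  by apply/funext => x; rewrite qconjK qconj_mul.
Qed.
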